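(* Let $F:\mathbb{R}^N\times\mathbb{R}\times\mathbb{R}^N\times S^N\to\mathbb{R}$ be continuous and uniformly elliptic: there are $0<\lambda\le\Lambda$ with $\lambda\,\mathrm{tr}(Q)\le F(x,t,p,X)-F(x,t,p,X+Q)\le\Lambda\,\mathrm{tr}(Q)$ for all $x,p,t,X$ and all $Q\in S^N$, $Q\ge0$. Let $A$ be a metric space and $b:\mathbb{R}^N\times A\to\mathbb{R}^N$, $c:\mathbb{R}^N\times A\to\mathbb{R}$ continuous, such that for every $R>0$ there is $K_R$ with $\sup_{|x|\le R,\alpha}(|b|+|c|)\le K_R$ and $|b(x,\alpha)-b(y,\alpha)|\le K_R|x-y|$ for $|x|,|y|\le R$; $c\ge0$ and $c$ continuous in $x$ uniformly in $|x|\le R,\alpha$; and for some $R_o>0$, $\sup_\alpha(b(x,\alpha)\cdot x-c(x,\alpha)|x|^2\log|x|)\le\lambda-(N-1)\Lambda$ for $|x|\ge R_o$. Assume $F(x,t,p,0)\le\sup_{\alpha\in A}\{c(x,\alpha)t-b(x,\alpha)\cdot p\}$ for all $x,t,p$. Let $v\in LSC(\mathbb{R}^N)$ be a viscosity supersolution of $F(x,v,Dv,D^2v)=0$ in $\mathbb{R}^N$ with $\liminf_{|x|\to\infty}v(x)/\log|x|\ge0$. If either $c\equiv0$ or $v\le0$, then $v$ is constant.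
   Context: $S^N$ is the space of real symmetric $N\times N$ matrices. *)

(* Defs.v *)
From HB Require Import structures.
From mathcomp Require Import all_boot all_order all_algebra.
From mathcomp Require Import all_classical all_reals all_analysis.
Set Implicit Arguments. Unset Strict Implicit. Unset Printing Implicit Defensive.
Import Order.TTheory GRing.Theory Num.Theory.
Import numFieldNormedType.Exports.
Local Open Scope classical_set_scope.
Local Open Scope ring_scope.

Section Defs.
Variables (R : realType) (N : nat).

Definition dotv (p x : 'rV[R]_N) : R := \sum_(i < N) p 0 i * x 0 i.
Definition enorm (x : 'rV[R]_N) : R := Num.sqrt (dotv x x).

Definition ebasis (i : 'I_N) : 'rV[R]_N := delta_mx 0 i.

Definition symmx (X : 'M[R]_N) : Prop := X^T = X.
Definition psdmx (Q : 'M[R]_N) : Prop := forall u : 'rV[R]_N, 0 <= (u *m Q *m u^T) 0 0.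

(* C^2 functions on R^N: all first and second partial derivatives exist
   everywhere and are continuous (which is the classical C^2). *)
Definition C2 (phi : 'rV[R]_N -> R) : Prop :=
  continuous phi /\
  (forall i x, derivable phi x (ebasis i)) /\
  (forall i, continuous (fun y => 'D_(ebasis i) phi y)) /\
  (forall i j x, derivable (fun y => 'D_(ebasis i) phi y) x (ebasis j)) /\
  (forall i j, continuous (fun y => 'D_(ebasis j) (fun z => 'D_(ebasis i) phi z) y)).

Definition gradient (phi : 'rV[R]_N -> R) (x : 'rV[R]_N) : 'rV[R]_N :=
  \row_i 'D_(ebasis i) phi x.
Definition hessian (phi : 'rV[R]_N -> R) (x : 'rV[R]_N) : 'M[R]_N :=
  \matrix_(i, j) 'D_(ebasis j) (fun z => 'D_(ebasis i) phi z) x.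

Definition lsc (v : 'rV[R]_N -> R) : Prop :=
  forall x (e : R), 0 < e -> \forall y \near x, v x - e < v y.

Definition local_min (f : 'rV[R]_N -> R) (x0 : 'rV[R]_N) : Prop :=
  \forall y \near x0, f x0 <= f y.

Definition visc_supersol
  (F : 'rV[R]_N -> R -> 'rV[R]_N -> 'M[R]_N -> R) (v : 'rV[R]_N -> R) : Prop :=
  lsc v /\
  forall (phi : 'rV[R]_N -> R) (x0 : 'rV[R]_N),
    C2 phi -> local_min (fun y => v y - phi y) x0 ->
    0 <= F x0 (v x0) (gradient phi x0) (hessian phi x0).

End Defs.

(* Main.v *)
Require Import Defs.
From HB Require Import structures.
From mathcomp Require Import all_boot all_order all_algebra.
From mathcomp Require Import all_classical all_reals all_analysis.
From mathcomp Require Import ring lra.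
From mathcomp Require finmap.
Import Order.TTheory GRing.Theory Num.Theory.
Import numFieldNormedType.Exports.
Local Open Scope classical_set_scope.
Local Open Scope ring_scope.
Set Implicit Arguments. Unset Strict Implicit. Unset Printing Implicit Defensive.
Set Warnings "-notation-overridden,-ambiguous-paths,-notation-incompatible-prefix".

Section Vec.
Variables (R : realType) (N : nat).
Implicit Types (a b x y p : 'rV[R]_N).

Lemma dotvC a b : dotv a b = dotv b a.
Proof. by rewrite /dotv; apply: eq_bigr => i _; rewrite mulrC. Qed.

Lemma dotvDl a b x : dotv (a + b) x = dotv a x + dotv b x.
Proof. by rewrite /dotv -big_split; apply: eq_bigr => i _; rewrite mxE mulrDl. Qed.

Lemma dotvZl (k : R) a x : dotv (k *: a) x = k * dotv a x.
Proof. by rewrite /dotv mulr_sumr; apply: eq_bigr => i _; rewrite mxE mulrA. Qed.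

Lemma dotvNl a x : dotv (- a) x = - dotv a x.
Proof. by rewrite -scaleN1r dotvZl mulN1r. Qed.

Lemma dotvBl a b x : dotv (a - b) x = dotv a x - dotv b x.
Proof. by rewrite dotvDl dotvNl. Qed.

Lemma dotvDr a b x : dotv x (a + b) = dotv x a + dotv x b.
Proof. by rewrite dotvC dotvDl !(dotvC x). Qed.

Lemma dotvZr (k : R) a x : dotv x (k *: a) = k * dotv x a.
Proof. by rewrite dotvC dotvZl dotvC. Qed.

Lemma dotvBr a b x : dotv x (a - b) = dotv x a - dotv x b.
Proof. by rewrite dotvC dotvBl !(dotvC x). Qed.

Lemma dotv_ge0 x : 0 <= dotv x x.
Proof. by rewrite /dotv; apply: sumr_ge0 => i _; rewrite -expr2 sqr_ge0. Qed.

Lemma dotv0 x : dotv x 0 = 0.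
Proof. by rewrite /dotv big1 // => i _; rewrite mxE mulr0. Qed.

Lemma dotv_eq0 {x} : dotv x x = 0 -> x = 0.
Proof.
move=> /eqP; rewrite /dotv psumr_eq0; last by move=> i _; rewrite -expr2 sqr_ge0.
move=> /allP H; apply/rowP => i; rewrite mxE.
have := H i (mem_index_enum i); rewrite implyTb mulf_eq0 orbb.
by move/eqP.
Qed.

Lemma coord_sqr_le x i : x 0 i ^+ 2 <= dotv x x.
Proof.
rewrite /dotv (bigD1 i) //= -expr2 lerDl; apply: sumr_ge0 => j _.
by rewrite -expr2 sqr_ge0.
Qed.

Lemma enorm_ge0 x : 0 <= enorm x.
Proof. exact: sqrtr_ge0. Qed.

Lemma enorm_sqr x : enorm x ^+ 2 = dotv x x.
Proof. by rewrite /enorm sqr_sqrtr // dotv_ge0. Qed.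

Lemma enorm_eq0 {x} : enorm x = 0 -> x = 0.
Proof. by move=> h; apply: dotv_eq0; rewrite -enorm_sqr h expr0n. Qed.

Lemma coord_le_enorm x i : `|x 0 i| <= enorm x.
Proof.
rewrite -ler_sqr ?nnegrE ?enorm_ge0 // enorm_sqr real_normK ?num_real //.
exact: coord_sqr_le.
Qed.

Lemma CS a b : dotv a b <= enorm a * enorm b.
Proof.
set A := enorm a; set B := enorm b.
have [A0|Ap] := eqVneq A 0.
  by rewrite (enorm_eq0 A0) dotvC dotv0 A0 mul0r.
have [B0|Bp] := eqVneq B 0.
  by rewrite (enorm_eq0 B0) dotv0 B0 mulr0.
have A0' : 0 < A by rewrite lt_def Ap enorm_ge0.
have B0' : 0 < B by rewrite lt_def Bp enorm_ge0.
have h := dotv_ge0 (B *: a - A *: b).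
rewrite !(dotvBl, dotvBr, dotvZl, dotvZr) -/A -/B in h.
rewrite -!enorm_sqr -/A -/B (dotvC b a) in h.
have : 0 <= 2 * (A * B) * (A * B - dotv a b) by nra.
by rewrite pmulr_rge0 ?subr_ge0 // mulr_gt0 // mulr_gt0.
Qed.

Lemma CS_abs a b : `|dotv a b| <= enorm a * enorm b.
Proof.
rewrite ler_norml CS andbT lerNl -dotvNl.
apply: (le_trans (CS _ _)).
suff -> : enorm (- a) = enorm a by [].
by rewrite /enorm dotvNl dotvC dotvNl opprK.
Qed.

Lemma enormD a b : enorm (a + b) <= enorm a + enorm b.
Proof.
rewrite -ler_sqr ?nnegrE ?addr_ge0 ?enorm_ge0 // enorm_sqr.
rewrite dotvDl !dotvDr -!enorm_sqr (dotvC b a).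
have := CS a b; nra.
Qed.

Lemma enormB a b : enorm (a - b) = enorm (b - a).
Proof. by rewrite -opprB /enorm dotvNl dotvC dotvNl opprK. Qed.

End Vec.

Section Calc.
Variables (R : realType) (N : nat).
Implicit Types (a b x y z p : 'rV[R]_N).

Definition sqd z x := dotv (x - z) (x - z).

Lemma dotv_ebasis x i : dotv x (ebasis R i) = x 0 i.
Proof.
rewrite /dotv (bigD1 i) //= big1 ?addr0.
  by rewrite /ebasis mxE !eqxx mulr1.
by move=> j ji; rewrite /ebasis mxE (negbTE ji) andbF mulr0.
Qed.

Lemma ebasis_coord i j : (ebasis R i : 'rV[R]_N) 0 j = (j == i)%:R.
Proof. by rewrite /ebasis mxE eqxx. Qed.

Lemma dotv_ebasis2 i : dotv (ebasis R i) (ebasis R i : 'rV[R]_N) = 1.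
Proof. by rewrite dotv_ebasis ebasis_coord eqxx. Qed.

Lemma sqd_line z x i (h : R) :
  sqd z (h *: ebasis R i + x) = sqd z x + 2 * h * (x 0 i - z 0 i) + h ^+ 2.
Proof.
rewrite /sqd; set u := x - z.
rewrite (_ : h *: ebasis R i + x - z = u + h *: ebasis R i); last first.
  by rewrite /u -addrA addrC.
have hu : u 0 i = x 0 i - z 0 i by rewrite /u !mxE.
clearbody u.
rewrite dotvDl !dotvDr !dotvZl !dotvZr dotv_ebasis2 dotv_ebasis (dotvC (ebasis R i)) dotv_ebasis hu.
ring.
Qed.

Lemma sqd_ge0 z x : 0 <= sqd z x.
Proof. exact: dotv_ge0. Qed.

Lemma continuous_sum_fun (T : topologicalType) (s : seq 'I_N) (g : 'I_N -> T -> R) :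
  (forall k, continuous (g k)) -> continuous (fun t => \sum_(k <- s) g k t).
Proof.
move=> cg; elim: s => [|a s IH].
  rewrite (_ : (fun _ => _) = cst 0); first exact: cst_continuous.
  by apply: funext => t; rewrite big_nil.
rewrite (_ : (fun _ => _) = g a + (fun t => \sum_(k <- s) g k t)).
  by move=> t; apply: continuousD; [exact: cg | exact: IH].
by apply: funext => t; rewrite big_cons.
Qed.

Lemma continuous_coord i : continuous (fun y : 'rV[R]_N => y 0 i).
Proof. exact: coord_continuous. Qed.

Lemma continuous_coordB z k : continuous (fun y : 'rV[R]_N => y 0 k - z 0 k).
Proof.
rewrite (_ : (fun _ => _) = (fun y => y 0 k) + cst (- z 0 k)).
  by move=> y; apply: continuousD; [exact: continuous_coord| exact: cst_continuous].
by apply: funext => y; rewrite !fctE.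
Qed.

Lemma continuous_sqd z : continuous (sqd z).
Proof.
rewrite /sqd /dotv; apply: continuous_sum_fun => k.
have ck : continuous (fun y : 'rV[R]_N => (y - z) 0 k).
  rewrite (_ : (fun _ => _) = (fun y => y 0 k) + cst (- z 0 k)).
    by move=> y; apply: continuousD; [exact: continuous_coord| exact: cst_continuous].
  by apply: funext => y; rewrite !mxE.
by move=> y; apply: continuousM; exact: ck.
Qed.

Lemma continuous_enorm z : continuous (fun x => enorm (x - z)).
Proof.
move=> x; apply: (@continuous_comp _ _ _ (sqd z) (@Num.sqrt R)).
  exact: continuous_sqd.
exact: sqrt_continuous.
Qed.

Lemma is_derive_dir (f : 'rV[R]_N -> R) x v (g : R -> R) dg :
  (forall h, f (h *: v + x) = g h) -> is_derive (0:R) (1:R) g (dg:R) -> is_derive x v f dg.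
Proof.
move=> fg [dg1 vg].
have e : (fun h : R => f (h *: v + x)) = g by apply: funext.
split.
  by apply/derivable1P; rewrite e.
rewrite -vg /derive.
have -> : f x = g 0 by rewrite -fg scale0r add0r.
suff -> : (fun h : R => h^-1 *: ((f \o shift x) (h *: v) - g 0)) =
  (fun h : R => h^-1 *: ((g \o shift 0) (h *: 1) - g 0)) by [].
apply: funext => h /=.
rewrite addr0 fg. rewrite (_ : h *: (1:R) = h) //; exact: mulr1.
Qed.

End Calc.

Section Radial.
Variables (R : realType) (N : nat) (z : 'rV[R]_N) (H H1 H2 : R -> R).
Hypothesis dH : forall q : R, 0 <= q -> is_derive q 1 H (H1 q).
Hypothesis dH1 : forall q : R, 0 <= q -> is_derive q 1 H1 (H2 q).
Hypothesis cH2 : forall q : R, 0 <= q -> {for q, continuous H2}.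

Definition radf (x : 'rV[R]_N) := H (sqd z x).

Lemma poly_derive (Q a : R) :
  is_derive (0:R) 1 (fun h : R => Q + 2 * h * a + h ^+ 2) (2 * a).
Proof.
have := is_deriveD (is_deriveD (is_derive_cst Q (0:R) 1)
          (is_deriveZ (2 * a) (is_derive_id (0:R) 1)))
          (is_deriveX 2 (is_derive_id (0:R) 1)).
have -> : (cst Q + (2 * a) \*: id + id ^+ 2) = (fun h : R => Q + 2 * h * a + h ^+ 2).
  apply: funext => h /=. rewrite !fctE /=. change ((2 * a) *: h) with ((2*a) * h). ring.
move=> hd; apply: is_derive_eq hd _.
by rewrite /GRing.scale /=; ring.
Qed.

Lemma H_cont q : 0 <= q -> {for q, continuous H}.
Proof.
move=> q0; apply: differentiable_continuous; apply/derivable1_diffP.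
by have [] := dH q0.
Qed.

Lemma H1_cont q : 0 <= q -> {for q, continuous H1}.
Proof.
move=> q0; apply: differentiable_continuous; apply/derivable1_diffP.
by have [] := dH1 q0.
Qed.

Lemma rad_D1 x i :
  is_derive x (ebasis R i) radf (2 * H1 (sqd z x) * (x 0 i - z 0 i)).
Proof.
set Q := sqd z x; set a := x 0 i - z 0 i.
apply: (@is_derive_dir _ _ radf x (ebasis R i) (H \o (fun h : R => Q + 2 * h * a + h ^+ 2))).
  by move=> h; rewrite /radf sqd_line.
have e0 : (fun h : R => Q + 2 * h * a + h ^+ 2) 0 = Q.
  by rewrite /= mulr0 mul0r addr0 expr0n addr0.
have hH : is_derive ((fun h : R => Q + 2 * h * a + h ^+ 2) 0) 1 H (H1 Q).
  by rewrite e0; apply: dH; exact: sqd_ge0.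
have := @is_derive1_comp R H (fun h : R => Q + 2 * h * a + h ^+ 2) 0 (H1 Q) (2 * a) hH (poly_derive Q a).
by move=> hd; apply: is_derive_eq hd _; ring.
Qed.

Lemma rad_D1E x i : 'D_(ebasis R i) radf x = 2 * H1 (sqd z x) * (x 0 i - z 0 i).
Proof. by have [_ ->] := rad_D1 x i. Qed.

Lemma coord_line x i j (h : R) :
  (h *: ebasis R j + x) 0 i - z 0 i = (x 0 i - z 0 i) + h * (i == j)%:R.
Proof. by rewrite !mxE eqxx /=; ring. Qed.

Lemma rad_D2 x i j :
  is_derive x (ebasis R j) (fun y => 2 * H1 (sqd z y) * (y 0 i - z 0 i))
    (2 * (H2 (sqd z x) * (2 * (x 0 j - z 0 j)) * (x 0 i - z 0 i)
          + H1 (sqd z x) * (i == j)%:R)).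
Proof.
set Q := sqd z x; set a := x 0 j - z 0 j; set b := x 0 i - z 0 i.
set d : R := (i == j)%:R.
set s := (fun h : R => Q + 2 * h * a + h ^+ 2).
apply: (@is_derive_dir _ _ _ x (ebasis R j)
  ((fun h : R => 2 * (H1 \o s) h) * (fun h : R => b + h * d))).
  by move=> h; rewrite coord_line sqd_line /= fctE.
have e0 : s 0 = Q by rewrite /s /= mulr0 mul0r addr0 expr0n addr0.
have hH : is_derive (s 0) 1 H1 (H2 Q).
  by rewrite e0; apply: dH1; exact: sqd_ge0.
have c1 := @is_derive1_comp R H1 s 0 (H2 Q) (2 * a) hH (poly_derive Q a).
have c2 := is_deriveZ 2 c1.
have l1 : is_derive (0:R) 1 (fun h : R => b + h * d) d.
  have := is_deriveD (is_derive_cst b (0:R) 1) (is_deriveZ d (is_derive_id (0:R) 1)).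
  have -> : (cst b + d \*: id) = (fun h : R => b + h * d).
    by apply: funext => h /=; rewrite /GRing.scale /= mulrC.
  by move=> hd; apply: is_derive_eq hd _; rewrite /GRing.scale /= mulr1 add0r.
have := is_deriveM c2 l1.
have -> : (2 \*: (H1 \o s)) = (fun h : R => 2 * (H1 \o s) h) by [].
move=> hd; apply: is_derive_eq hd _.
rewrite /GRing.scale /= e0 /= mul0r addr0; ring.
Qed.

Lemma rad_C2 : C2 radf.
Proof.
split; [|split; [|split; [|split]]].
- move=> x; apply: continuous_comp; first exact: continuous_sqd.
  by apply: H_cont; exact: sqd_ge0.
- by move=> i x; have [] := rad_D1 x i.
- move=> i.
  rewrite (_ : (fun y => 'D_(ebasis R i) radf y) =
     (fun y => 2 * H1 (sqd z y)) * (fun y => y 0 i - z 0 i)); last first.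
    by apply: funext => y; rewrite rad_D1E.
  move=> x; apply: continuousM.
    apply: continuousM; first exact: cst_continuous.
    apply: continuous_comp; first exact: continuous_sqd.
    by apply: H1_cont; exact: sqd_ge0.
  exact: continuous_coordB.
- move=> i j x.
  rewrite (_ : (fun y => 'D_(ebasis R i) radf y) =
     (fun y => 2 * H1 (sqd z y) * (y 0 i - z 0 i))); last first.
    by apply: funext => y; rewrite rad_D1E.
  by have [] := rad_D2 x i j.
- move=> i j.
  have cc : forall k, continuous (fun y : 'rV[R]_N => y 0 k - z 0 k).
    exact: continuous_coordB.
  rewrite (_ : (fun y => 'D_(ebasis R j) (fun z0 => 'D_(ebasis R i) radf z0) y) =
     cst 2 * ((H2 \o sqd z) * (cst 2 * (fun y => y 0 j - z 0 j)) * (fun y => y 0 i - z 0 i)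
          + (H1 \o sqd z) * cst ((i == j)%:R))); last first.
    apply: funext => y.
    rewrite (_ : (fun z0 => 'D_(ebasis R i) radf z0) =
     (fun y => 2 * H1 (sqd z y) * (y 0 i - z 0 i))); last first.
      by apply: funext => y'; rewrite rad_D1E.
    by have [_ ->] := rad_D2 y i j; rewrite !fctE.
  move=> x; apply: continuousM; first exact: cst_continuous.
  apply: continuousD.
    apply: continuousM; last exact: cc.
    apply: continuousM.
      apply: continuous_comp; first exact: continuous_sqd.
      by apply: cH2; exact: sqd_ge0.
    apply: continuousM; first exact: cst_continuous.
    exact: cc.
  apply: continuousM; last exact: cst_continuous.
  apply: continuous_comp; first exact: continuous_sqd.
  by apply: H1_cont; exact: sqd_ge0.
Qed.

Lemma rad_gradient x :
  gradient radf x = (2 * H1 (sqd z x)) *: (x - z).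
Proof. by apply/rowP => i; rewrite !mxE rad_D1E. Qed.

Lemma rad_hessian x :
  hessian radf x = (2 * H1 (sqd z x)) *: 1%:M
                  + (4 * H2 (sqd z x)) *: ((x - z)^T *m (x - z)).
Proof.
apply/matrixP => i j; rewrite !mxE.
rewrite (_ : (fun z0 => 'D_(ebasis R i) radf z0) =
     (fun y => 2 * H1 (sqd z y) * (y 0 i - z 0 i))); last first.
  by apply: funext => y'; rewrite rad_D1E.
have [_ ->] := rad_D2 x i j.
rewrite big_ord1 !mxE.
case: (i =P j) => [->|/eqP nij]; rewrite ?eqxx ?(negbTE nij) /=; ring.
Qed.

End Radial.

Section Mx.
Variables (R : realType) (N : nat).
Implicit Types (u w : 'rV[R]_N) (Q X : 'M[R]_N).

Definition qf w Q := (w *m Q *m w^T) 0 0.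

Lemma qfD w Q1 Q2 : qf w (Q1 + Q2) = qf w Q1 + qf w Q2.
Proof. by rewrite /qf mulmxDr mulmxDl mxE. Qed.

Lemma qfZ w (a : R) Q : qf w (a *: Q) = a * qf w Q.
Proof. by rewrite /qf -scalemxAr -scalemxAl mxE. Qed.

Lemma qfN w Q : qf w (- Q) = - qf w Q.
Proof. by rewrite -scaleN1r qfZ mulN1r. Qed.

Lemma rowcol u w : (u *m w^T) 0 0 = dotv u w.
Proof. by rewrite mxE /dotv; apply: eq_bigr => k _; rewrite mxE. Qed.

Lemma qf1 w : qf w 1%:M = dotv w w.
Proof. by rewrite /qf mulmx1 rowcol. Qed.

Lemma qf_uu w u : qf w (u^T *m u) = dotv w u ^+ 2.
Proof.
rewrite /qf !mulmxA -mulmxA mxE big_ord1.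
by rewrite rowcol rowcol dotvC expr2.
Qed.

Lemma tr_uu u : \tr (u^T *m u) = dotv u u.
Proof.
rewrite /mxtrace /dotv; apply: eq_bigr => i _.
by rewrite mxE big_ord1 mxE.
Qed.

Lemma tr1 : \tr (1%:M : 'M[R]_N) = N%:R.
Proof. exact: mxtrace1. Qed.

Lemma symmxD X Q : symmx X -> symmx Q -> symmx (X + Q).
Proof. by rewrite /symmx raddfD /= => -> ->. Qed.

Lemma symmxN X : symmx X -> symmx (- X).
Proof. by rewrite /symmx raddfN /= => ->. Qed.

Lemma symmxZ (a : R) X : symmx X -> symmx (a *: X).
Proof. by rewrite /symmx linearZ /= => ->. Qed.

Lemma symmx1 : symmx (1%:M : 'M[R]_N).
Proof. exact: trmx1. Qed.

Lemma symmx0 : symmx (0 : 'M[R]_N).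
Proof. exact: trmx0. Qed.

Lemma symmx_uu u : symmx (u^T *m u).
Proof. by rewrite /symmx trmx_mul trmxK. Qed.

Lemma psd_uu (a : R) u : 0 <= a -> psdmx (a *: (u^T *m u)).
Proof.
move=> a0 w; rewrite -/(qf w _) qfZ qf_uu.
by apply: mulr_ge0 => //; rewrite sqr_ge0.
Qed.

Lemma psd_1 (a : R) : 0 <= a -> psdmx (a *: (1%:M : 'M[R]_N)).
Proof. by move=> a0 w; rewrite -/(qf w _) qfZ qf1; apply: mulr_ge0 => //; exact: dotv_ge0. Qed.

Lemma psd_proj (a : R) u : 0 <= a -> 0 < dotv u u ->
  psdmx (a *: (1%:M - (dotv u u)^-1 *: (u^T *m u))).
Proof.
move=> a0 q0 w; rewrite -/(qf w _) qfZ qfD qfN qfZ qf1 qf_uu.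
apply: mulr_ge0 => //; rewrite subr_ge0.
rewrite ler_pdivrMl // mulrC.
have h := CS_abs w u.
have : dotv w u ^+ 2 <= (enorm w * enorm u) ^+ 2.
  by rewrite -real_normK ?num_real // lerXn2r // ?nnegrE ?normr_ge0 // mulr_ge0 // enorm_ge0.
by rewrite exprMn !enorm_sqr.
Qed.

Lemma ell_bound (F : 'rV[R]_N -> R -> 'rV[R]_N -> 'M[R]_N -> R) (lam Lam : R) x t p X1 X2 :
  (forall x t p (X Q : 'M[R]_N), symmx X -> symmx Q -> psdmx Q ->
     lam * \tr Q <= F x t p X - F x t p (X + Q) /\
     F x t p X - F x t p (X + Q) <= Lam * \tr Q) ->
  symmx X1 -> symmx X2 -> psdmx X1 -> psdmx X2 ->
  F x t p (X1 - X2) <= F x t p 0 - lam * \tr X1 + Lam * \tr X2.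
Proof.
move=> Hell s1 s2 p1 p2.
have [_ h1] := Hell x t p (X1 - X2) X2 (symmxD s1 (symmxN s2)) s2 p2.
have [h2 _] := Hell x t p 0 X1 symmx0 s1 p1.
rewrite subrK in h1; rewrite add0r in h2.
lra.
Qed.

End Mx.

Module L5m.
Import finmap.
Lemma seq_min (R : realType) (s : seq R) : s != [::] ->
  exists2 r, r \in s & forall r', r' \in s -> r <= r'.
Proof.
elim: s => [//|a s IH] _.
have [->|sn] := eqVneq s [::].
  by exists a; rewrite ?mem_seq1 // => r'; rewrite mem_seq1 => /eqP ->.
have [r rs rmin] := IH sn.
have [ar|ra] := leP a r.
  exists a; first exact: mem_head.
  move=> r'; rewrite in_cons => /orP [/eqP ->//|/rmin]; exact: le_trans.
exists r; first by rewrite in_cons rs orbT.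
move=> r'; rewrite in_cons => /orP [/eqP ->|/rmin //]; exact: ltW.
Qed.

Lemma lsc_min_gen (R : realType) (T : ptopologicalType) (f : T -> R) (A : set T) :
  (forall x (e : R), 0 < e -> \forall y \near x, f x - e < f y) ->
  compact A -> A !=set0 -> exists2 c, A c & forall t, A t -> f c <= f t.
Proof.
move=> lscf cA [a Aa].
apply: contrapT => nomin.
have nm : forall c, A c -> exists2 t, A t & f t < f c.
  move=> c Ac; apply: contrapT => h; apply: nomin; exists c => // t At.
  rewrite leNgt; apply/negP => ftc; apply: h; by exists t.
rewrite compact_cover in cA.
have := cA R [set r | exists2 t, A t & f t = r] (fun r => [set x | r < f x]).
case.
- move=> r _; rewrite openE => x /= rx.
  have := lscf x (f x - r); rewrite subr_gt0 => /(_ rx).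
  rewrite /interior; apply: filterS => y /=.
  by rewrite opprB addrC subrK.
- move=> x Ax; have [t At ftx] := nm x Ax.
  by exists (f t) => //; exists t.
move=> D' D'D Acov.
have [r0 [ra ra1 ra2]] : exists r0, [/\ r0 \in D', exists2 t, A t & f t = r0 &
    forall r', r' \in D' -> r0 <= r'].
  have : (D' : seq R) != [::].
    have [r /= rD' _] := Acov a Aa.
    have rs : r \in (D' : seq R) by [].
    by apply/eqP => e; move: rs; rewrite e.
  move=> /seq_min [r rin rmin]; exists r; split => //.
  by have /set_mem := D'D r rin.
have [t At ftr] := ra1.
have [r' /= r'D ltr] := Acov t At.
have := ra2 r' r'D; rewrite -ftr.
by rewrite leNgt ltr.
Qed.

Section Topo.
Variables (R : realType) (N : nat).
Implicit Types (x y z : 'rV[R]_N).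

Lemma lsc_min (f : 'rV[R]_N -> R) (A : set 'rV[R]_N) :
  lsc f -> compact A -> A !=set0 -> exists2 c, A c & forall t, A t -> f c <= f t.
Proof. move=> l; exact: lsc_min_gen. Qed.

Lemma lscB (v g : 'rV[R]_N -> R) : lsc v -> continuous g -> lsc (fun x => v x - g x).
Proof.
move=> lv cg x e e0.
have e20 : 0 < e / 2 by rewrite divr_gt0.
have h1 := lv x _ e20.
have h2 : \forall y \near x, g y < g x + e / 2.
  have := cg x [set r | r < g x + e / 2].
  apply; apply: open_nbhs_nbhs; split; first exact: open_lt.
  by rewrite /= ltrDl.
by apply: filterS2 h1 h2 => y h1y h2y /=; lra.
Qed.

Definition annulus z (a b : R) := [set x : 'rV[R]_N | a <= enorm (x - z) /\ enorm (x - z) <= b].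

Lemma bounded_enorm (A : set 'rV[R]_N) (M : R) :
  (forall x, A x -> enorm x <= M) -> bounded_set A.
Proof.
move=> AM; rewrite /bounded_near.
exists M; split; first exact: num_real.
move=> M' MM' x Ax /=.
change (mx_norm x <= M'); rewrite mx_normrE; apply: bigmax_le.
  by apply: le_trans (ltW MM'); apply: le_trans (AM x Ax); exact: enorm_ge0.
move=> [i j] _ /=; rewrite (ord1 i).
by apply: le_trans (ltW MM'); apply: le_trans (AM x Ax); exact: coord_le_enorm.
Qed.

Lemma compact_annulus z a b : compact (annulus z a b).
Proof.
apply: bounded_closed_compact.
  apply: (@bounded_enorm _ (b + enorm z)) => x [_ xb].
  have := enormD (x - z) z; rewrite subrK => h.
  by apply: le_trans h _; rewrite lerD2r.
rewrite (_ : annulus z a b = (fun x => enorm (x - z)) @^-1` ([set r | a <= r] `&` [set r | r <= b])).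
  apply: preimage_closed; first by move=> x _; exact: continuous_enorm.
  by apply: closedI; [exact: closed_ge | exact: closed_le].
by [].
Qed.

Lemma near_gt_enorm z c (a : R) : a < enorm (c - z) -> \forall y \near c, a < enorm (y - z).
Proof.
move=> h; have := @continuous_enorm R N z c [set r | a < r].
by apply; apply: open_nbhs_nbhs; split; [exact: open_gt| exact: h].
Qed.

Lemma near_lt_enorm z c (a : R) : enorm (c - z) < a -> \forall y \near c, enorm (y - z) < a.
Proof.
move=> h; have := @continuous_enorm R N z c [set r | r < a].
by apply; apply: open_nbhs_nbhs; split; [exact: open_lt| exact: h].
Qed.

Lemma local_min_of (f : 'rV[R]_N -> R) (S : set 'rV[R]_N) c :
  (forall t, S t -> f c <= f t) -> (\forall y \near c, S y) -> local_min f c.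
Proof. by move=> h; apply: filterS => y /h. Qed.

End Topo.

End L5m.
Import L5m.

Section D1.
Variable R : realType.
Implicit Types (f g : R -> R) (x df dg k : R).

Lemma dadd f g x df dg : is_derive x 1 f df -> is_derive x 1 g dg ->
  is_derive x 1 (fun y => f y + g y) (df + dg).
Proof. move=> hf hg; exact: (is_deriveD hf hg). Qed.

Lemma dsub f g x df dg : is_derive x 1 f df -> is_derive x 1 g dg ->
  is_derive x 1 (fun y => f y - g y) (df - dg).
Proof. move=> hf hg; exact: (is_deriveB hf hg). Qed.

Lemma dmulc k f x df : is_derive x 1 f df -> is_derive x 1 (fun y => k * f y) (k * df).
Proof. move=> hf; exact: (is_deriveZ k hf). Qed.

Lemma dcstadd k f x df : is_derive x 1 f df -> is_derive x 1 (fun y => k + f y) df.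
Proof.
move=> hf; have := dadd (is_derive_cst k x 1) hf.
by rewrite add0r.
Qed.

Lemma dpow n f x df : is_derive x 1 f df ->
  is_derive x 1 (fun y => f y ^+ n) (n%:R * f x ^+ n.-1 * df).
Proof.
move=> hf; have := is_deriveX n hf.
have -> : (f ^+ n) = (fun y => f y ^+ n).
  by apply: funext => y; elim: n {hf} => [|n IH]; rewrite ?expr0 ?exprS //= -?IH.
by [].
Qed.

Lemma dlin k x : is_derive x 1 (fun y : R => y + k) 1.
Proof.
have := dcstadd k (is_derive_id x 1).
have -> : (fun y : R => k + id y) = (fun y => y + k) by apply: funext => y; rewrite addrC.
by [].
Qed.

Lemma dscal k x : is_derive x 1 (fun y : R => k * y) k.
Proof.
have := dmulc k (is_derive_id x 1); rewrite mulr1; exact.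
Qed.

End D1.

Section Ext.
Variables (R : realType) (m eps g0 : R).

Definition sI (y : R) := (y + 1)^-1.
Definition Gx (y : R) := (-(1/2)) * ln (y + 1) + sI y.
Definition Hx (y : R) := m + eps * (Gx y - g0).
Definition H1x (y : R) := eps * ((-(1/2)) * sI y - sI y ^+ 2).
Definition H2x (y : R) := eps * ((1/2) * sI y ^+ 2 + 2 * sI y ^+ 3).

Lemma d_sI (y : R) : -1 < y -> is_derive y 1 sI (- sI y ^+ 2).
Proof.
move=> y1; have y10 : y + 1 != 0 by rewrite gt_eqF // -ltrBlDr sub0r.
have := @is_deriveV R (fun z => z + 1) y 1 1 y10 (dlin 1 y).
move=> h; apply: is_derive_eq h _.
by rewrite /sI exprVn /GRing.scale /= mulr1.
Qed.

Lemma d_ln1 (y : R) : -1 < y -> is_derive y 1 (fun y => ln (y + 1)) (sI y).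
Proof.
move=> y1; have y10 : 0 < y + 1 by rewrite -ltrBlDr sub0r.
have := @is_derive1_comp R (@ln R) (fun z => z + 1) y _ _ (is_derive1_ln y10) (dlin 1 y).
by rewrite mulr1.
Qed.

Lemma d_Hx (y : R) : -1 < y -> is_derive y 1 Hx (H1x y).
Proof.
move=> y1.
have h := dcstadd m (dmulc eps (dsub (dadd (dmulc (-(1/2)) (d_ln1 y1)) (d_sI y1))
   (is_derive_cst g0 y 1))).
apply: is_derive_eq h _.
by rewrite /H1x subr0.
Qed.

Lemma d_H1x (y : R) : -1 < y -> is_derive y 1 H1x (H2x y).
Proof.
move=> y1.
have h := dmulc eps (dsub (dmulc (-(1/2)) (d_sI y1)) (dpow 2 (d_sI y1))).
apply: is_derive_eq h _.
rewrite /H2x; congr (_ * _); rewrite /=; ring.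
Qed.

Lemma d_H2x (y : R) : -1 < y -> derivable H2x y 1.
Proof.
move=> y1.
have h := dmulc eps (dadd (dmulc (1/2) (dpow 2 (d_sI y1))) (dmulc 2 (dpow 3 (d_sI y1)))).
by case: h.
Qed.

End Ext.

Section Hopf.
Variables (R : realType) (m eta k c0 : R).

Definition Hh (y : R) := m + eta * (expR (- k * y) - c0).
Definition H1h (y : R) := - (eta * k) * expR (- k * y).
Definition H2h (y : R) := eta * k ^+ 2 * expR (- k * y).

Lemma d_e (y : R) : is_derive y 1 (fun y => expR (- k * y)) (- k * expR (- k * y)).
Proof.
have := is_derive1_comp (is_derive_expR (- k * y)) (dscal (- k) y).
by rewrite mulrC.
Qed.

Lemma d_Hh (y : R) : is_derive y 1 Hh (H1h y).
Proof.
have h := dcstadd m (dmulc eta (dsub (d_e y) (is_derive_cst c0 y 1))).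
apply: is_derive_eq h _.
by rewrite /H1h subr0; ring.
Qed.

Lemma d_H1h (y : R) : is_derive y 1 H1h (H2h y).
Proof.
have h := dmulc (- (eta * k)) (d_e y).
apply: is_derive_eq h _.
by rewrite /H2h; ring.
Qed.

Lemma d_H2h (y : R) : derivable H2h y 1.
Proof. by have [] := dmulc (eta * k ^+ 2) (d_e y). Qed.

End Hopf.

Lemma ext_real (R : realType) (q : R) : 3 < q ->
  let s := sI q in
  [/\ (-(1/2)) * s - s ^+ 2 < 0,
      0 <= 2 * q * ((1/2) * s ^+ 2 + 2 * s ^+ 3) + ((-(1/2)) * s - s ^+ 2) &
      0 < q * ((1/2) * s ^+ 2 + 2 * s ^+ 3) + ((-(1/2)) * s - s ^+ 2)].
Proof.
move=> q3 s.
have q10 : 0 < q + 1 by lra.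
have s0 : 0 < s by rewrite /s /sI invr_gt0.
have qs : q * s = 1 - s.
  by rewrite /s /sI; field; rewrite gt_eqF.
have s4 : s < 1/4.
  nra.
have e1 : q * ((1/2) * s ^+ 2 + 2 * s ^+ 3) = (q * s) * ((1/2) * s + 2 * s ^+ 2) by ring.
have e2 : 2 * q * ((1/2) * s ^+ 2 + 2 * s ^+ 3) = 2 * ((q * s) * ((1/2) * s + 2 * s ^+ 2)) by ring.
rewrite e1 e2 qs; split; nra.
Qed.

Lemma hopf_real (R : realType) (K rho r lam Lam n k : R) :
  0 <= K -> 0 < rho -> rho / 2 <= r -> 0 <= Lam -> 0 < lam -> 0 <= n ->
  k = (2 * K / rho + 4 * Lam * n / rho ^+ 2 + 1) / lam ->
  K * r + Lam * n < 2 * lam * k * r ^+ 2.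
Proof.
move=> K0 rho0 rr Lam0 lam0 n0 ->.
have r0 : 0 < r by lra.
have -> : 2 * lam * ((2 * K / rho + 4 * Lam * n / rho ^+ 2 + 1) / lam) * r ^+ 2 =
   2 * (K * r * (2 * r / rho)) + 2 * (Lam * n * ((2 * r / rho) ^+ 2)) + 2 * r ^+ 2.
  by field; rewrite ?gt_eqF.
have h1 : 1 <= 2 * r / rho by rewrite ler_pdivlMr //; lra.
have h2 : 1 <= (2 * r / rho) ^+ 2 by rewrite expr_ge1 //; lra.
have h3 : K * r <= K * r * (2 * r / rho) by rewrite ler_peMr // mulr_ge0 //; lra.
have h4 : Lam * n <= Lam * n * (2 * r / rho) ^+ 2 by rewrite ler_peMr // mulr_ge0.
nra.
Qed.

Section RealFacts.
Variable R : realType.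

Lemma sI_gt0 (q : R) : 0 <= q -> 0 < sI q.
Proof. move=> q0; rewrite /sI invr_gt0; lra. Qed.

Lemma sI_le1 (q : R) : 0 <= q -> sI q <= 1.
Proof. move=> q0; rewrite /sI invf_le1; lra. Qed.

Lemma ln_sqr (r : R) : 0 < r -> ln (r ^+ 2) = 2 * ln r.
Proof. by move=> r0; rewrite lnXn // mulr2n mulr_natl mulr2n. Qed.

Lemma Gx_up (r : R) : 1 <= r -> Gx (r ^+ 2) <= - ln r + 1.
Proof.
move=> r1; rewrite /Gx.
have r0 : 0 < r by lra.
have q0 : 0 <= r ^+ 2 by exact: sqr_ge0.
have := sI_le1 q0.
have : ln (r ^+ 2) <= ln (r ^+ 2 + 1).
  by rewrite ler_ln ?posrE ?exprn_gt0 //; lra.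
rewrite ln_sqr //; lra.
Qed.

Lemma g0b (R1 : R) : 0 <= R1 -> - Gx (R1 ^+ 2) <= (1/2) * ln (R1 ^+ 2 + 1).
Proof.
move=> R10; rewrite /Gx.
have := sI_gt0 (sqr_ge0 R1); lra.
Qed.

Lemma tb (r : R) : 1 <= r ->
  Gx (r ^+ 2) - 2 * ((-(1/2)) * sI (r ^+ 2) - sI (r ^+ 2) ^+ 2) * r ^+ 2 * ln r <= 3.
Proof.
move=> r1.
have r0 : 0 < r by lra.
set q := r ^+ 2.
have q0 : 0 <= q by exact: sqr_ge0.
have hG := Gx_up r1.
set s := sI q.
have s0 : 0 < s by exact: sI_gt0.
have qs : q * s = 1 - s by rewrite /s /sI; field; rewrite gt_eqF //; lra.
have lr0 : 0 <= ln r by exact: ln_ge0.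
have lrr : ln r < r by exact: ln_sublinear.
have rs : r * s <= 1.
  have : r <= q + 1 by rewrite /q; nra.
  move=> h; have : s * (q + 1) = 1 by rewrite /s /sI mulVf // gt_eqF //; lra.
  nra.
have e : - 2 * ((-(1/2)) * s - s ^+ 2) * q * ln r = (q * s) * ln r + 2 * s * (q * s) * ln r by field.
have : - 2 * ((-(1/2)) * s - s ^+ 2) * q * ln r <= ln r + 2.
  rewrite e qs.
  have h1 : (1 - s) * ln r <= ln r by nra.
  have h2 : 2 * s * (1 - s) * ln r <= 2 * (s * ln r) by nra.
  have h3 : s * ln r <= s * r by nra.
  nra.
lra.
Qed.

End RealFacts.

Section Main.
Variables (R : realType) (N : nat)
  (F : 'rV[R]_N -> R -> 'rV[R]_N -> 'M[R]_N -> R)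
  (lam Lam : R) (A : pseudoMetricType R)
  (b : 'rV[R]_N -> A -> 'rV[R]_N) (c : 'rV[R]_N -> A -> R)
  (Ro : R) (v : 'rV[R]_N -> R).
Hypothesis lam0 : 0 < lam.
Hypothesis lamLam : lam <= Lam.
Hypothesis Hell : forall x t p (X Q : 'M[R]_N), symmx X -> symmx Q -> psdmx Q ->
     lam * \tr Q <= F x t p X - F x t p (X + Q) /\
     F x t p X - F x t p (X + Q) <= Lam * \tr Q.
Hypothesis Hgrow : forall x, Ro <= enorm x ->
     (ereal_sup [set (dotv (b x a) x - c x a * enorm x ^+ 2 * ln (enorm x))%:E
                 | a in [set: A]] <= (lam - (N%:R - 1) * Lam)%:E)%E.
Hypothesis Hstr : forall x t p,
     ((F x t p 0)%:E <= ereal_sup [set (c x a * t - dotv (b x a) p)%:E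
                                   | a in [set: A]])%E.

Lemma str_bound x t p B : (forall a, c x a * t - dotv (b x a) p <= B) -> F x t p 0 <= B.
Proof.
move=> hB; rewrite -lee_fin; apply: le_trans (Hstr x t p) _.
by apply: ge_ereal_sup => _ [a _ <-]; rewrite lee_fin.
Qed.

Lemma grow_bound x a : Ro <= enorm x ->
  dotv (b x a) x - c x a * enorm x ^+ 2 * ln (enorm x) <= lam - (N%:R - 1) * Lam.
Proof.
move=> hx; rewrite -lee_fin; apply: le_trans (Hgrow hx).
by apply: ereal_sup_ubound; exists a.
Qed.

Lemma ext_ineq R1 eps x0 t :
  2 <= R1 -> Ro <= R1 -> 0 < eps -> R1 < enorm x0 ->
  (forall a, c x0 a * (t - 2 * H1x eps (sqd 0 x0) * sqd 0 x0 * ln (enorm x0)) <= 0) ->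
  F x0 t ((2 * H1x eps (sqd 0 x0)) *: (x0 - 0))
     ((2 * H1x eps (sqd 0 x0)) *: 1%:M + (4 * H2x eps (sqd 0 x0)) *: ((x0 - 0)^T *m (x0 - 0))) < 0.
Proof.
move=> R12 RoR1 eps0 R1x tc.
set q := sqd 0 x0; set r := enorm x0.
have qr : q = r ^+ 2 by rewrite /q /sqd subr0 -enorm_sqr.
have r2 : 2 < r by rewrite /r; lra.
have q3 : 3 < q by rewrite qr; nra.
have q0 : 0 < q by lra.
have [G1n G2p1 G2p2] := ext_real q3.
move: G1n G2p1 G2p2.
rewrite /H1x /H2x -/q.
set s := sI q.
set G1 := (-(1/2)) * s - s ^+ 2.
set G2 := (1/2) * s ^+ 2 + 2 * s ^+ 3.
move=> G1n G2p1 G2p2.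
set u := x0 - 0.
have uq : dotv u u = q by [].
set P := u^T *m u.
set X1 := (4 * (eps * G2) + 2 * (eps * G1) / q) *: P.
set X2 := (- (2 * (eps * G1))) *: (1%:M - q^-1 *: P).
have eqX : (2 * (eps * G1)) *: 1%:M + (4 * (eps * G2)) *: P = X1 - X2.
  apply/matrixP => i j; rewrite /X1 /X2 !mxE.
  by field; rewrite gt_eqF.
rewrite eqX.
have c1 : 0 <= 4 * (eps * G2) + 2 * (eps * G1) / q.
  have -> : 4 * (eps * G2) + 2 * (eps * G1) / q = (2 * eps / q) * (2 * q * G2 + G1).
    by field; rewrite gt_eqF.
  by apply: mulr_ge0; [apply: divr_ge0; lra| lra].
have c2 : 0 <= - (2 * (eps * G1)) by nra.
have s1 : symmx X1 by apply: symmxZ; exact: symmx_uu.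
have s2 : symmx X2.
  by apply: symmxZ; apply: symmxD; [exact: symmx1| apply: symmxN; apply: symmxZ; exact: symmx_uu].
have p1 : psdmx X1 by exact: psd_uu.
have p2 : psdmx X2 by apply: psd_proj => //; rewrite uq.
have hF := ell_bound x0 t ((2 * (eps * G1)) *: u) Hell s1 s2 p1 p2.
apply: le_lt_trans hF _.
set K0 := lam - (N%:R - 1) * Lam.
have hF0 : F x0 t ((2 * (eps * G1)) *: u) 0 <= - (2 * (eps * G1)) * K0.
  apply: str_bound => a.
  have hg := grow_bound a (le_trans RoR1 (ltW R1x)).
  have hta := tc a.
  rewrite -/r -qr in hg.
  rewrite dotvZr (_ : u = x0); last by rewrite /u subr0.
  set d := dotv (b x0 a) x0 in hg *.
  have hK : 0 <= K0 + c x0 a * q * ln r - d by rewrite /K0; lra.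
  have := mulr_ge0 c2 hK.
  rewrite /H1x -/q -/s -/G1 -/r in hta.
  nra.
have t1 : \tr X1 = (4 * (eps * G2) + 2 * (eps * G1) / q) * q.
  by rewrite /X1 mxtraceZ tr_uu.
have t2 : \tr X2 = (- (2 * (eps * G1))) * (N%:R - 1).
  by rewrite /X2 mxtraceZ raddfB /= mxtraceZ tr_uu uq tr1 mulVf ?gt_eqF.
rewrite t1 t2.
have -> : (4 * (eps * G2) + 2 * (eps * G1) / q) * q = 4 * (eps * G2) * q + 2 * (eps * G1).
  by field; rewrite gt_eqF.
rewrite /K0 in hF0.
have : 0 < eps * (q * G2 + G1) by apply: mulr_gt0.
move=> h; have := mulr_gt0 lam0 h; nra.
Qed.

Lemma hopf_ineq yc rho eta k x0 t K :
  0 < rho -> 0 < eta -> rho / 2 <= enorm (x0 - yc) -> 0 <= K ->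
  (forall a, enorm (b x0 a) <= K) ->
  k = (2 * K / rho + 4 * Lam * N%:R / rho ^+ 2 + 1) / lam ->
  (forall a, c x0 a * t <= 0) ->
  F x0 t ((2 * H1h eta k (sqd yc x0)) *: (x0 - yc))
    ((2 * H1h eta k (sqd yc x0)) *: 1%:M
       + (4 * H2h eta k (sqd yc x0)) *: ((x0 - yc)^T *m (x0 - yc))) < 0.
Proof.
move=> rho0 eta0 rr K0 bK kdef tc.
set q := sqd yc x0; set r := enorm (x0 - yc).
have qr : q = r ^+ 2 by rewrite /q /sqd -enorm_sqr.
have Lam0 : 0 <= Lam by exact: le_trans (ltW lam0) lamLam.
have k0 : 0 < k.
  rewrite kdef; apply: divr_gt0 => //.
  have : 0 <= 2 * K / rho + 4 * Lam * N%:R / rho ^+ 2.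
    apply: addr_ge0; apply: divr_ge0; rewrite ?mulr_ge0 ?exprn_ge0 //; lra.
  lra.
rewrite /H1h /H2h -/q.
set e := expR (- k * q).
have e0 : 0 < e by exact: expR_gt0.
set u := x0 - yc.
set P := u^T *m u.
set X1 := (4 * (eta * k ^+ 2 * e)) *: P.
set X2 := (2 * (eta * k) * e) *: (1%:M : 'M[R]_N).
have eqX : (2 * (- (eta * k) * e)) *: 1%:M + (4 * (eta * k ^+ 2 * e)) *: P = X1 - X2.
  by apply/matrixP => i j; rewrite /X1 /X2 !mxE; ring.
rewrite eqX.
have s1 : symmx X1 by apply: symmxZ; exact: symmx_uu.
have s2 : symmx X2 by apply: symmxZ; exact: symmx1.
have p1 : psdmx X1 by apply: psd_uu; rewrite !mulr_ge0 ?exprn_ge0 //; lra.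
have p2 : psdmx X2 by apply: psd_1; rewrite !mulr_ge0 //; lra.
have hF := ell_bound x0 t ((2 * (- (eta * k) * e)) *: u) Hell s1 s2 p1 p2.
apply: le_lt_trans hF _.
have r0 : 0 <= r by exact: enorm_ge0.
have hF0 : F x0 t ((2 * (- (eta * k) * e)) *: u) 0 <= 2 * (eta * k) * e * (K * r).
  apply: str_bound => a.
  rewrite dotvZr.
  have h1 : dotv (b x0 a) u <= K * r.
    apply: le_trans (CS _ _) _; rewrite -/r; apply: ler_wpM2r => //.
  have := tc a.
  have : 0 <= 2 * (eta * k) * e by rewrite !mulr_ge0 //; lra.
  nra.
have t1 : \tr X1 = 4 * (eta * k ^+ 2 * e) * q by rewrite /X1 mxtraceZ tr_uu.
have t2 : \tr X2 = 2 * (eta * k) * e * N%:R by rewrite /X2 mxtraceZ tr1.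
rewrite t1 t2 qr.
have hr := hopf_real K0 rho0 rr Lam0 lam0 (ler0n _ N) kdef.
have pos : 0 < 2 * (eta * k) * e by rewrite !mulr_gt0.
have hp : 0 < 2 * lam * k * r ^+ 2 - (K * r + Lam * N%:R) by rewrite -/r in hr; lra.
have := mulr_gt0 pos hp.
nra.
Qed.

Hypothesis Hsup : visc_supersol F v.

Lemma test_rad z H H1 H2 :
  (forall q : R, 0 <= q -> is_derive q 1 H (H1 q)) ->
  (forall q : R, 0 <= q -> is_derive q 1 H1 (H2 q)) ->
  (forall q : R, 0 <= q -> {for q, continuous H2}) ->
  forall x0, local_min (fun y => v y - radf z H y) x0 ->
  0 <= F x0 (v x0) ((2 * H1 (sqd z x0)) *: (x0 - z))
        ((2 * H1 (sqd z x0)) *: 1%:M + (4 * H2 (sqd z x0)) *: ((x0 - z)^T *m (x0 - z))).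
Proof.
move=> dH dH1 cH2 x0 lm.
have := Hsup.2 (radf z H) x0 (rad_C2 z dH dH1 cH2) lm.
by rewrite (rad_gradient z dH) (rad_hessian z dH dH1).
Qed.

Hypothesis Hbnd : forall r : R, 0 < r -> exists K : R,
     (forall x a, enorm x <= r -> enorm (b x a) + `|c x a| <= K) /\
     (forall x y a, enorm x <= r -> enorm y <= r ->
        enorm (b x a - b y a) <= K * enorm (x - y)).
Hypothesis c_ge0 : forall x a, 0 <= c x a.
Hypothesis Hcase : (forall x a, c x a = 0) \/ (forall x, v x <= 0).

Lemma ct_nonpos x a : c x a * v x <= 0.
Proof.
case: Hcase => [h|h]; first by rewrite h mul0r.
by apply: mulr_ge0_le0; [exact: c_ge0| exact: h].
Qed.

Lemma bK_of (r : R) : 0 < r -> exists2 K : R, 0 <= K & forall x a, enorm x <= r -> enorm (b x a) <= K.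
Proof.
move=> r0; have [K [hK _]] := Hbnd r0.
exists `|K|; first exact: normr_ge0.
move=> x a xr; have := hK x a xr.
have := normr_ge0 (c x a); have := ler_norm K; lra.
Qed.

Lemma closed_sub (m : R) : closed [set x | v x <= m].
Proof.
rewrite closedE => p np /=.
rewrite leNgt; apply/negP => mp; apply: np.
have := Hsup.1 p (v p - m); rewrite subr_gt0 => /(_ mp).
by apply: filterS => y /=; rewrite opprB addrC subrK => my; apply/negP; rewrite -ltNge.
Qed.

Lemma Hh_val (m eta k c0 : R) (x yc : 'rV[R]_N) :
  radf yc (Hh m eta k c0) x = m + eta * (expR (- k * enorm (x - yc) ^+ 2) - c0).
Proof. by rewrite /radf /Hh /sqd enorm_sqr. Qed.

Lemma strong_min xm : (forall x, v xm <= v x) -> forall y, v y = v xm.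
Proof.
set m := v xm => hmin y.
apply: contrapT => hy.
have my : m < v y by rewrite lt_def hmin andbT; apply/eqP => e; apply: hy; rewrite e.
set d0 := enorm (xm - y).
set S := annulus y 0 d0 `&` [set x | v x <= m].
have cS : compact S by apply: compact_closedI; [exact: compact_annulus| exact: closed_sub].
have S0 : S !=set0 by exists xm; split; [split; [exact: enorm_ge0| by []] | rewrite /= /m].
have [x1 Sx1 x1min] := EVT_min_rV S0 cS
   (continuous_subspaceT (@continuous_enorm R N y)).
have x1min' : forall x, S x -> enorm (x1 - y) <= enorm (x - y).
  by move=> x Sx; apply: x1min; rewrite inE.
move: Sx1; rewrite inE => -[[_ x1d0] vx1].
have vx1m : v x1 = m by apply: le_anti; rewrite vx1 hmin.
set rho := enorm (x1 - y).
have rho0 : 0 < rho.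
  rewrite lt_def enorm_ge0 andbT; apply/eqP => e.
  have := enorm_eq0 e; move/eqP; rewrite subr_eq0 => /eqP ex1.
  by move: my; rewrite -ex1 vx1m ltxx.
have inner : forall x, enorm (x - y) < rho -> m < v x.
  move=> x xr; rewrite ltNge; apply/negP => vxm.
  have Sx : S x by split => //; split; [exact: enorm_ge0| apply: ltW; apply: lt_le_trans xr _].
  by have := x1min' x Sx; rewrite -/rho leNgt xr.
have B0c : compact (annulus y 0 (rho / 2)) by exact: compact_annulus.
have B00 : annulus y 0 (rho / 2) !=set0.
  by exists y; rewrite /annulus /= subrr /enorm dotv0 sqrtr0 lexx divr_ge0 ?ltW.
have [xe xeB xemin] := lsc_min (lscB Hsup.1 (@cst_continuous _ _ m)) B0c B00.
set eta := v xe - m.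
have eta0 : 0 < eta.
  rewrite /eta subr_gt0; apply: inner; move: xeB => [_ h]; rewrite -/rho; lra.
have rK0 : 0 < enorm y + rho by have := enorm_ge0 y; lra.
have [K K0 bK] := bK_of rK0.
set k := (2 * K / rho + 4 * Lam * N%:R / rho ^+ 2 + 1) / lam.
have Lam0 : 0 <= Lam by exact: le_trans (ltW lam0) lamLam.
have k0 : 0 < k.
  rewrite /k; apply: divr_gt0 => //.
  have : 0 <= 2 * K / rho + 4 * Lam * N%:R / rho ^+ 2.
    apply: addr_ge0; apply: divr_ge0; rewrite ?mulr_ge0 ?exprn_ge0 //; lra.
  lra.
set c0 := expR (- k * rho ^+ 2).
have c00 : 0 < c0 by exact: expR_gt0.
set phi := radf y (Hh m eta k c0).
have dH : forall q : R, 0 <= q -> is_derive q 1 (Hh m eta k c0) (H1h eta k q).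
  by move=> q _; exact: d_Hh.
have dH1 : forall q : R, 0 <= q -> is_derive q 1 (H1h eta k) (H2h eta k q).
  by move=> q _; exact: d_H1h.
have cH2 : forall q : R, 0 <= q -> {for q, continuous (H2h eta k)}.
  move=> q _; apply: differentiable_continuous; apply/derivable1_diffP; exact: d_H2h.
have [cphi _] := rad_C2 y dH dH1 cH2.
set psi := fun x => v x - phi x.
have K2c : compact (annulus y (rho / 2) rho) by exact: compact_annulus.
have K20 : annulus y (rho / 2) rho !=set0.
  by exists x1; split; rewrite -/rho ?lexx //; lra.
have [x2 x2K x2min] := lsc_min (lscB Hsup.1 cphi) K2c K20.
have psi1 : psi x1 = 0.
  by rewrite /psi /phi Hh_val -/rho -/c0 subrr mulr0 addr0 vx1m subrr.
have [xs [xsr [xsr2 xsloc]]] : exists xs, rho / 2 <= enorm (xs - y) /\ enorm (xs - y) <= rho /\ local_min psi xs.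
  have [neg|pos] := ltP (psi x2) 0.
  - exists x2; move: x2K => [x2a x2b]; split => //; split => //.
    have x2a' : rho / 2 < enorm (x2 - y).
      rewrite lt_def x2a andbT; apply/eqP => e.
      have : eta <= v x2 - m by apply: xemin; split; [exact: enorm_ge0| rewrite e].
      move: neg; rewrite /psi /phi Hh_val e.
      have : expR (- k * (rho / 2) ^+ 2) <= 1.
        by rewrite expR_le1 mulNr oppr_le0 mulr_ge0 ?exprn_ge0 //; lra.
      nra.
    have x2b' : enorm (x2 - y) < rho.
      rewrite lt_def x2b andbT; apply/eqP => e.
      move: neg; rewrite /psi /phi Hh_val -e -/c0 subrr mulr0 addr0.
      by have := hmin x2; lra.
    apply: (local_min_of (S := annulus y (rho / 2) rho)).
      by move=> t tK; exact: x2min.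
    apply: filterS2 (near_gt_enorm x2a') (near_lt_enorm x2b') => t h1 h2.
    by split; apply: ltW.
  - exists x1; split; first by rewrite -/rho; lra.
    split; first by rewrite -/rho.
    have x1r : rho / 2 < enorm (x1 - y) by rewrite -/rho; lra.
    apply: (local_min_of (S := [set t | rho / 2 < enorm (t - y)])); last first.
      exact: near_gt_enorm x1r.
    move=> t /= tr; rewrite psi1.
    have [tle|tgt] := leP (enorm (t - y)) rho.
      by apply: le_trans pos _; apply: x2min; split => //; apply: ltW.
    rewrite /psi /phi Hh_val subr_ge0.
    have : expR (- k * enorm (t - y) ^+ 2) <= c0.
      rewrite /c0 ler_expR !mulNr lerN2; apply: ler_wpM2l; first exact: ltW.
      by rewrite lerXn2r ?nnegrE ?enorm_ge0 ?ltW.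
    have := hmin t; rewrite -/m => hm.
    nra.
have := test_rad dH dH1 cH2 xsloc.
have xsb : enorm xs <= enorm y + rho.
  have := enormD (xs - y) y; rewrite subrK; lra.
have := hopf_ineq rho0 eta0 xsr K0 (fun a => bK xs a xsb) (erefl k) (fun a => ct_nonpos xs a).
rewrite -/(sqd y xs).
lra.
Qed.

Hypothesis Hlim : forall e : R, 0 < e -> exists r : R,
     forall x, r < enorm x -> - e <= v x / ln (enorm x).

Lemma ext_core R1 : 2 <= R1 -> Ro <= R1 ->
  ((forall x a, c x a = 0) \/ ((forall x, v x <= 0) /\ exists2 x', enorm x' <= R1 & v x' < 0)) ->
  exists xm, forall x, v xm <= v x.
Proof.
move=> R12 RoR1 hc.
have R10 : 0 <= R1 by lra.
have Bc : compact (annulus (0 : 'rV[R]_N) 0 R1) by exact: compact_annulus.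
have B0 : annulus (0 : 'rV[R]_N) 0 R1 !=set0.
  by exists 0; rewrite /annulus /= subrr /enorm dotv0 sqrtr0 lexx.
have [xm xmB xmmin] := lsc_min Hsup.1 Bc B0.
set m := v xm.
have inB : forall z, enorm z <= R1 -> m <= v z.
  by move=> z zR; apply: xmmin; rewrite /annulus /= subr0; split => //; exact: enorm_ge0.
have mneg : (forall x a, c x a = 0) \/ ((forall x, v x <= 0) /\ m < 0).
  case: hc => [h|[h [x' x'R x'neg]]]; [by left| right; split => //].
  by apply: le_lt_trans (inB _ x'R) x'neg.
exists xm => x.
have [xin|xout] := leP (enorm x) R1; first exact: inB.
rewrite leNgt; apply/negP => vxm.
set delta := m - v x.
have delta0 : 0 < delta by rewrite /delta subr_gt0.
set g0 := Gx (R1 ^+ 2).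
set Phi := fun z : 'rV[R]_N => Gx (sqd 0 z) - g0.
set C1 := 3 + (1/2) * ln (R1 ^+ 2 + 1).
have lnR0 : 0 <= ln (R1 ^+ 2 + 1) by apply: ln_ge0; have := sqr_ge0 R1; lra.
have C10 : 0 < C1 by rewrite /C1; lra.
set e2 := if m < 0 then - m / C1 else 1.
have e20 : 0 < e2.
  rewrite /e2; case: ifP => // mlt; apply: divr_gt0 => //; lra.
set eps := Num.min (delta / (`|Phi x| + 1)) e2.
have Phi10 : 0 < `|Phi x| + 1 by have := normr_ge0 (Phi x); lra.
have eps0 : 0 < eps by rewrite /eps lt_min e20 andbT divr_gt0.
have epsd : eps * (`|Phi x| + 1) <= delta.
  by rewrite -ler_pdivlMr // /eps ge_min lexx.
have epsm : m < 0 -> eps * C1 <= - m.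
  move=> mlt; have : eps <= e2 by rewrite /eps ge_min lexx orbT.
  by rewrite /e2 mlt ler_pdivlMr.
have vxPhi : v x < m + eps * Phi x.
  have hP : - `|Phi x| <= Phi x by have := ler_norm (- Phi x); rewrite normrN; lra.
  have := ler_wpM2l (ltW eps0) hP.
  rewrite /delta in epsd; nra.
have eps2 : 0 < eps / 2 by apply: divr_gt0.
have [re hre] := Hlim eps2.

set C3 := 1 + (1/2) * ln (R1 ^+ 2 + 1).
set L := 2 * (`|m| + eps * C3) / eps.
set T := expR L.
have le_max_l : forall a1 b1 : R, a1 <= Num.max a1 b1 by move=> a1 b1; rewrite le_max lexx.
have le_max_r : forall a1 b1 : R, b1 <= Num.max a1 b1 by move=> a1 b1; rewrite le_max lexx orbT.
set rho := Num.max (Num.max R1 re) (Num.max T (enorm x)) + 1.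
have rhoR1 : R1 < rho by rewrite /rho; have := le_max_l R1 re; have := le_max_l (Num.max R1 re) (Num.max T (enorm x)); lra.
have rhox : enorm x < rho by rewrite /rho; have := le_max_r T (enorm x); have := le_max_r (Num.max R1 re) (Num.max T (enorm x)); lra.
have rhore : re < rho by rewrite /rho; have := le_max_r R1 re; have := le_max_l (Num.max R1 re) (Num.max T (enorm x)); lra.
have rhoT : T < rho by rewrite /rho; have := le_max_l T (enorm x); have := le_max_r (Num.max R1 re) (Num.max T (enorm x)); lra.
have sqdE : forall z : 'rV[R]_N, sqd 0 z = enorm z ^+ 2 by move=> z; rewrite /sqd subr0 enorm_sqr.
have big : forall z, rho <= enorm z -> m + eps * Phi z < v z.
  move=> z zr.
  have z1 : 1 < enorm z by lra.
  have lz0 : 0 < ln (enorm z) by exact: ln_gt0.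
  have hv : - (eps / 2) * ln (enorm z) <= v z.
    have := hre z (lt_le_trans rhore zr).
    by rewrite ler_pdivlMr.
  have hP : Phi z <= - ln (enorm z) + C3.
    rewrite /Phi sqdE; have := Gx_up (ltW z1); have := g0b R10.
    rewrite /C3 -/g0; lra.
  have hL : L < ln (enorm z).
    rewrite ltNge; apply/negP => hle.
    have : expR (ln (enorm z)) <= T by rewrite /T ler_expR.
    rewrite lnK ?posrE; last by lra.
    lra.
  have hL' : 2 * (`|m| + eps * C3) < eps * ln (enorm z).
    by move: hL; rewrite /L ltr_pdivrMr //; lra.
  have := ler_norm m.
  nra.
have dH : forall q : R, 0 <= q -> is_derive q 1 (Hx m eps g0) (H1x eps q).
  by move=> q q0; apply: d_Hx; lra.
have dH1 : forall q : R, 0 <= q -> is_derive q 1 (H1x eps) (H2x eps q).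
  by move=> q q0; apply: d_H1x; lra.
have cH2 : forall q : R, 0 <= q -> {for q, continuous (H2x eps)}.
  move=> q q0; apply: differentiable_continuous; apply/derivable1_diffP; apply: d_H2x; lra.
have [cphi _] := rad_C2 (0 : 'rV[R]_N) dH dH1 cH2.
set phi := radf (0 : 'rV[R]_N) (Hx m eps g0).
have phiE : forall z, phi z = m + eps * Phi z by [].
set psi := fun z => v z - phi z.
have Kc : compact (annulus (0 : 'rV[R]_N) R1 rho) by exact: compact_annulus.
have K0 : annulus (0 : 'rV[R]_N) R1 rho !=set0.
  by exists x; rewrite /annulus /= subr0; split; apply: ltW.
have [x0 x0K x0min] := lsc_min (lscB Hsup.1 cphi) Kc K0.
have psix : psi x < 0 by rewrite /psi phiE; lra.
have psix0 : psi x0 < 0.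
  apply: le_lt_trans psix; apply: x0min.
  by rewrite /annulus /= subr0; split; apply: ltW.
move: x0K; rewrite /annulus /= subr0 => -[x0a x0b].
have x0a' : R1 < enorm x0.
  rewrite lt_def x0a andbT; apply/eqP => e.
  have hB : m <= v x0 by apply: inB; rewrite e.
  move: psix0; rewrite /psi phiE /Phi sqdE e -/g0 subrr mulr0 addr0.
  lra.
have x0b' : enorm x0 < rho.
  rewrite lt_def x0b andbT; apply/eqP => e.
  have hb : rho <= enorm x0 by rewrite e.
  move: psix0; rewrite /psi phiE; have := big x0 hb; lra.
have loc : local_min psi x0.
  apply: (local_min_of (S := annulus (0 : 'rV[R]_N) R1 rho)).
    by move=> t tK; exact: x0min.
  have h1 := @near_gt_enorm R N 0 x0 R1; rewrite subr0 in h1.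
  have h2 := @near_lt_enorm R N 0 x0 rho; rewrite subr0 in h2.
  apply: filterS2 (h1 x0a') (h2 x0b') => t t1 t2.
  by split; apply: ltW.
have := test_rad dH dH1 cH2 loc.
have tc : forall a, c x0 a * (v x0 - 2 * H1x eps (sqd 0 x0) * sqd 0 x0 * ln (enorm x0)) <= 0.
  move=> a; case: mneg => [hc0|[hv mlt]]; first by rewrite hc0 mul0r.
  apply: mulr_ge0_le0; first exact: c_ge0.
  have x01 : 1 <= enorm x0 by lra.
  have htb := tb x01.
  have hg := g0b R10.
  have hps : v x0 < m + eps * Phi x0 by move: psix0; rewrite /psi phiE; lra.
  move: hps; rewrite /Phi sqdE /H1x => hps.
  set G1 := (-(1/2)) * sI (enorm x0 ^+ 2) - sI (enorm x0 ^+ 2) ^+ 2 in htb *.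
  have key : Gx (enorm x0 ^+ 2) - g0 - 2 * G1 * enorm x0 ^+ 2 * ln (enorm x0) <= C1.
    by rewrite /C1 /g0; lra.
  have := ler_wpM2l (ltW eps0) key.
  have := epsm mlt.
  lra.
have := ext_ineq R12 RoR1 eps0 x0a' tc.
lra.
Qed.

Lemma global_const : exists k, forall x, v x = k.
Proof.
have R12 : (2 : R) <= Num.max 2 Ro by rewrite le_max lexx.
have RoR1 : Ro <= Num.max 2 Ro by rewrite le_max lexx orbT.
case: Hcase => [hc|hv].
  have [xm hm] := ext_core R12 RoR1 (or_introl hc).
  by exists (v xm) => y; exact: strong_min hm y.
case: (pselect (exists x', v x' < 0)) => [[x' x'neg]|nneg].
  set R1 := Num.max (Num.max 2 Ro) (enorm x').
  have R12' : 2 <= R1 by apply: le_trans R12 _; rewrite le_max lexx.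
  have RoR1' : Ro <= R1 by apply: le_trans RoR1 _; rewrite le_max lexx.
  have x'R : enorm x' <= R1 by rewrite le_max lexx orbT.
  have [xm hm] := ext_core R12' RoR1' (or_intror (conj hv (ex_intro2 _ _ x' x'R x'neg))).
  by exists (v xm) => y; exact: strong_min hm y.
exists 0 => x; apply: le_anti; rewrite hv /= leNgt; apply/negP => h.
by apply: nneg; exists x.
Qed.

End Main.


Theorem corollary3p2 (R : realType) (N : nat)
  (F : 'rV[R]_N -> R -> 'rV[R]_N -> 'M[R]_N -> R)
  (lam Lam : R)
  (A : pseudoMetricType R)
  (b : 'rV[R]_N -> A -> 'rV[R]_N) (c : 'rV[R]_N -> A -> R)
  (Ro : R) (v : 'rV[R]_N -> R) :
  (* F continuous on R^N x R x R^N x S^N *)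
  {within [set z : 'rV[R]_N * R * 'rV[R]_N * 'M[R]_N | symmx z.2],
     continuous (fun z => F z.1.1.1 z.1.1.2 z.1.2 z.2)} ->
  (* uniform ellipticity *)
  0 < lam -> lam <= Lam ->
  (forall x t p (X Q : 'M[R]_N), symmx X -> symmx Q -> psdmx Q ->
     lam * \tr Q <= F x t p X - F x t p (X + Q) /\
     F x t p X - F x t p (X + Q) <= Lam * \tr Q) ->
  (* A is a metric space *)
  hausdorff_space A ->
  (* b, c continuous *)
  continuous (fun z : 'rV[R]_N * A => b z.1 z.2) ->
  continuous (fun z : 'rV[R]_N * A => c z.1 z.2) ->
  (* local boundedness and local Lipschitz continuity of b *)
  (forall r : R, 0 < r -> exists K : R,
     (forall x a, enorm x <= r -> enorm (b x a) + `|c x a| <= K) /\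
     (forall x y a, enorm x <= r -> enorm y <= r ->
        enorm (b x a - b y a) <= K * enorm (x - y))) ->
  (* c >= 0, continuous in x uniformly in |x| <= r, a *)
  (forall x a, 0 <= c x a) ->
  (forall r e : R, 0 < r -> 0 < e -> exists d : R, 0 < d /\
     forall x y a, enorm x <= r -> enorm y <= r -> enorm (x - y) < d ->
       `|c x a - c y a| < e) ->
  (* growth condition at infinity *)
  0 < Ro ->
  (forall x, Ro <= enorm x ->
     (ereal_sup [set (dotv (b x a) x - c x a * enorm x ^+ 2 * ln (enorm x))%:E
                 | a in [set: A]] <= (lam - (N%:R - 1) * Lam)%:E)%E) ->
  (* structure condition *)
  (forall x t p,
     ((F x t p 0)%:E <= ereal_sup [set (c x a * t - dotv (b x a) p)%:E
                                   | a in [set: A]])%E) ->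
  (* v is an LSC viscosity supersolution in R^N *)
  visc_supersol F v ->
  (* liminf_{|x| -> oo} v(x) / log|x| >= 0 *)
  (forall e : R, 0 < e -> exists r : R,
     forall x, r < enorm x -> - e <= v x / ln (enorm x)) ->
  ((forall x a, c x a = 0) \/ (forall x, v x <= 0)) ->
  exists k : R, forall x, v x = k.
Proof.
move=> _ lam0 lamLam Hell _ _ _ Hbnd c_ge0 _ _ Hgrow Hstr Hsup Hlim Hcase.
exact: (global_const lam0 lamLam Hell Hgrow Hstr Hsup Hbnd c_ge0 Hcase Hlim).
Qed.
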